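(* Let $n\ge 1$ and $1\le k\le n$. The number of $\alpha\in\mathcal{ORCT}_n$ with $w^+(\alpha)=k$ is $$F(n;k)=2\sum_{p=1}^{k}\binom{n-1}{p-1}-1.$$
   Context: $X_n=\{1,2,\dots,n\}$ with its usual order; maps are written on the right ($x\alpha$). A map $\alpha:X_n\to X_n$ is order-preserving if $x\le y$ implies $x\alpha\le y\alpha$, order-reversing if $x\le y$ implies $x\alpha\ge y\alpha$, and a contraction if $|x\alpha-y\alpha|\le|x-y|$ for all $x,y$. $\mathcal{ORCT}_n$ is the set of all maps $X_n\to X_n$ (defined on all of $X_n$) that are contractions and are either order-preserving or order-reversing. Right waist $w^+(\alpha)=\max(\mathrm{Im}\,\alpha)$. *)

(* Defs.v *)
(* X_n = {1,...,n} is modelled by 'I_n via i |-> i+1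
   (a translation, which preserves order and distances). *)
From mathcomp Require Import all_boot.
Set Implicit Arguments. Unset Strict Implicit. Unset Printing Implicit Defensive.

Definition natdist (a b : nat) : nat := (a - b) + (b - a).

Definition order_preserving n (f : {ffun 'I_n -> 'I_n}) : bool :=
  [forall x : 'I_n, forall y : 'I_n, (x <= y) ==> (f x <= f y)].

Definition order_reversing n (f : {ffun 'I_n -> 'I_n}) : bool :=
  [forall x : 'I_n, forall y : 'I_n, (x <= y) ==> (f y <= f x)].

Definition contraction n (f : {ffun 'I_n -> 'I_n}) : bool :=
  [forall x : 'I_n, forall y : 'I_n, natdist (f x) (f y) <= natdist x y].

Definition in_ORCT n (f : {ffun 'I_n -> 'I_n}) : bool :=
  contraction f && (order_preserving f || order_reversing f).

(* right waist w^+(f) = max Im f, read back in X_n = {1..n} (hence the +1) *)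
Definition right_waist n (f : {ffun 'I_n -> 'I_n}) : nat :=
  \max_(x : 'I_n) (f x).+1.

(* Main.v *)
Require Import Defs.
From mathcomp Require Import all_boot.
From mathcomp Require Import zify.
Set Implicit Arguments. Unset Strict Implicit. Unset Printing Implicit Defensive.

Definition FF n' (f : {ffun 'I_n'.+1 -> 'I_n'.+1}) (x : nat) : nat := f (inord x).

Lemma FF_val n' (f : {ffun 'I_n'.+1 -> 'I_n'.+1}) (x : 'I_n'.+1) : FF f x = f x.
Proof. by rewrite /FF inord_val. Qed.

Definition steps n' (f : {ffun 'I_n'.+1 -> 'I_n'.+1}) :=
  forall i, i < n' -> FF f i <= FF f i.+1 <= (FF f i).+1.

Lemma steps_mono n' (f : {ffun 'I_n'.+1 -> 'I_n'.+1}) : steps f ->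
  forall x y, x <= y -> y <= n' -> FF f x <= FF f y /\ FF f y <= FF f x + (y - x).
Proof.
move=> H x y; elim: y => [|y IH].
  rewrite leqn0 => /eqP -> _; lia.
rewrite leq_eqVlt => /orP [/eqP <- _|]; first lia.
rewrite ltnS => xy yn; have [h1 h2] := IH xy (ltnW yn).
have /andP[h3 h4] := H y yn; lia.
Qed.

Lemma A_steps n' (f : {ffun 'I_n'.+1 -> 'I_n'.+1}) :
  contraction f -> order_preserving f -> steps f.
Proof.
move=> /forallP C /forallP P i lti.
have e1 : (inord i : 'I_n'.+1) = i :> nat by rewrite inordK // ltnS ltnW.
have e2 : (inord i.+1 : 'I_n'.+1) = i.+1 :> nat by rewrite inordK.
move: (P (inord i)) => /forallP /(_ (inord i.+1)); rewrite e1 e2 leqnSn /= => h.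
move: (C (inord i)) => /forallP /(_ (inord i.+1)); rewrite e1 e2 /natdist => h'.
rewrite /FF; lia.
Qed.

Lemma steps_A n' (f : {ffun 'I_n'.+1 -> 'I_n'.+1}) :
  steps f -> contraction f && order_preserving f.
Proof.
move=> H; have M := steps_mono H.
apply/andP; split; apply/forallP => x; apply/forallP => y.
- rewrite /natdist -!FF_val.
  have xn := leq_ord x; have yn := leq_ord y.
  case: (leqP x y) => xy.
  + have [] := M _ _ xy yn; lia.
  + have [] := M _ _ (ltnW xy) xn; lia.
- apply/implyP => xy; rewrite -!FF_val.
  by have [] := M _ _ xy (leq_ord y).
Qed.

Lemma waist_op n' (f : {ffun 'I_n'.+1 -> 'I_n'.+1}) :
  order_preserving f -> right_waist f = (f ord_max).+1.
Proof.
move=> /forallP P; apply/eqP; rewrite eqn_leq; apply/andP; split.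
  apply/bigmax_leqP => x _.
  move: (P x) => /forallP /(_ ord_max) /implyP; rewrite ltnS; apply.
  exact: leq_ord.
rewrite /right_waist; exact: (@leq_bigmax _ (fun x : 'I_n'.+1 => (f x).+1) ord_max).
Qed.

Definition bm n' (S : {set 'I_n'}) (i : nat) : bool :=
  [exists j : 'I_n', (val j == i) && (j \in S)].

Lemma bm_val n' (S : {set 'I_n'}) (j : 'I_n') : bm S j = (j \in S).
Proof.
apply/existsP/idP => [[j' /andP[/eqP e h]]|h].
  by rewrite -(val_inj e).
by exists j; rewrite eqxx.
Qed.

Definition cnt n' (S : {set 'I_n'}) x := \sum_(x <= i < n') bm S i.

Lemma cnt_step n' (S : {set 'I_n'}) x : x < n' -> cnt S x = bm S x + cnt S x.+1.
Proof. by move=> h; rewrite /cnt big_ltn. Qed.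

Lemma cnt_end n' (S : {set 'I_n'}) : cnt S n' = 0.
Proof. by rewrite /cnt big_geq. Qed.

Lemma cnt_le0 n' (S : {set 'I_n'}) x : cnt S x <= cnt S 0.
Proof.
case: (leqP x n') => h.
  rewrite [cnt S 0](@big_cat_nat _ _ _ x) //; exact: leq_addl.
by rewrite /cnt big_geq // ltnW.
Qed.

Lemma card_cnt n' (S : {set 'I_n'}) : #|S| = cnt S 0.
Proof.
rewrite /cnt -sum1_card big_mkcond /= big_mkord.
by apply: eq_bigr => j _; rewrite bm_val; case: (j \in S).
Qed.

Definition g n' k (S : {set 'I_n'}) : {ffun 'I_n'.+1 -> 'I_n'.+1} :=
  [ffun x : 'I_n'.+1 => inord (k.-1 - cnt S x)].

Lemma FF_g n' k (S : {set 'I_n'}) x : k <= n'.+1 -> x <= n' ->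
  FF (g k S) x = k.-1 - cnt S x.
Proof.
move=> hk hx; rewrite /FF /g ffunE inordK ?inordK //; lia.
Qed.

Lemma countD (T : finType) j :
  #|[set S : {set T} | #|S| < j]| = \sum_(i < j) 'C(#|T|, i).
Proof.
elim: j => [|j IH].
  rewrite big_ord0; apply/eqP; rewrite cards_eq0; apply/eqP/setP => S.
  by rewrite !inE.
have -> : [set S : {set T} | #|S| < j.+1] =
          [set S : {set T} | #|S| < j] :|: [set S : {set T} | #|S| == j].
  by apply/setP => S; rewrite !inE ltnS leq_eqVlt orbC.
rewrite cardsU IH card_draws big_ord_recr /=.
have -> : #|[set S : {set T} | #|S| < j] :&: [set S : {set T} | #|S| == j]| = 0.
  apply/eqP; rewrite cards_eq0; apply/eqP/setP => S.
  rewrite !inE andbC; case: eqP => // ->; by rewrite ltnn.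
by rewrite subn0.
Qed.

Definition Aset n' k := [set f : {ffun 'I_n'.+1 -> 'I_n'.+1} |
  [&& contraction f, order_preserving f & right_waist f == k]].

Lemma card_A n' k : 1 <= k -> k <= n'.+1 ->
  #|Aset n' k| = \sum_(i < k) 'C(n', i).
Proof.
move=> hk1 hkn.
pose D := [set S : {set 'I_n'} | #|S| < k].
have -> : Aset n' k = g k @: D.
  apply/setP => f; rewrite inE; apply/idP/imsetP.
  - case/and3P => C P /eqP W.
    have St := A_steps C P.
    rewrite waist_op // in W.
    have Fn : FF f n' = k.-1 by rewrite -[n']/(val (@ord_max n')) FF_val -W.
    pose S := [set j : 'I_n' | FF f j < FF f j.+1].
    have bS i : i < n' -> bm S i = (FF f i < FF f i.+1).
      move=> h; by rewrite -[i]/(val (Ordinal h)) bm_val inE.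
    have claim : forall d, d <= n' -> FF f (n' - d) + cnt S (n' - d) = k.-1.
      elim => [|d IH] hd; first by rewrite subn0 cnt_end addn0.
      have e : (n' - d.+1).+1 = n' - d by lia.
      have lt : n' - d.+1 < n' by lia.
      rewrite cnt_step // bS // e.
      have := IH (ltnW hd); have /andP[] := St _ lt; rewrite e.
      case: ltnP => ? ? ? ?; lia.
    have claimx x : x <= n' -> FF f x + cnt S x = k.-1.
      move=> hx; have := claim (n' - x) (leq_subr _ _).
      by rewrite subKn.
    exists S.
      rewrite inE card_cnt; have := claimx 0 (leq0n _); lia.
    apply/ffunP => x; apply: val_inj; rewrite ffunE /= inordK;
      have := claimx x (leq_ord x); rewrite FF_val; lia.
  - case=> S; rewrite inE card_cnt => hS ->.
    have St : steps (g k S).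
      move=> i hi; rewrite !FF_g // ?(ltnW hi) //.
      rewrite cnt_step //; have := cnt_le0 S i; rewrite cnt_step //.
      case: (bm S i) => /= ?; lia.
    have /andP[-> ->] := steps_A St; rewrite /=.
    rewrite waist_op; last by case/andP: (steps_A St).
    rewrite -FF_val FF_g //= cnt_end subn0; lia.
rewrite card_in_imset; first by rewrite countD card_ord.
move=> S T; rewrite !inE !card_cnt => hS hT e.
apply/setP => j; rewrite -!bm_val.
have hj := ltn_ord j.
have := @FF_g _ k S j hkn (ltnW hj); have := @FF_g _ k S j.+1 hkn hj.
have := @FF_g _ k T j hkn (ltnW hj); have := @FF_g _ k T j.+1 hkn hj.
rewrite e (cnt_step S hj) (cnt_step T hj).
have := cnt_le0 S j; have := cnt_le0 T j.
rewrite (cnt_step S hj) (cnt_step T hj).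
case: (bm S j); case: (bm T j) => //= ? ? ? ? ? ?; lia.
Qed.

Definition rv n (f : {ffun 'I_n -> 'I_n}) : {ffun 'I_n -> 'I_n} :=
  [ffun x => f (rev_ord x)].

Lemma rvK n (f : {ffun 'I_n -> 'I_n}) : rv (rv f) = f.
Proof. by apply/ffunP => x; rewrite !ffunE rev_ordK. Qed.

Lemma rv_contr n (f : {ffun 'I_n -> 'I_n}) : contraction f -> contraction (rv f).
Proof.
move=> /forallP C; apply/forallP => x; apply/forallP => y; rewrite !ffunE.
move: (C (rev_ord x)) => /forallP /(_ (rev_ord y)).
rewrite /natdist /= => h; have := ltn_ord x; have := ltn_ord y; lia.
Qed.

Lemma rv_op n (f : {ffun 'I_n -> 'I_n}) : order_preserving f -> order_reversing (rv f).
Proof.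
move=> /forallP C; apply/forallP => x; apply/forallP => y; rewrite !ffunE.
apply/implyP => xy.
move: (C (rev_ord y)) => /forallP /(_ (rev_ord x)) /implyP; apply.
rewrite /=; have := ltn_ord x; have := ltn_ord y; lia.
Qed.

Lemma rv_or n (f : {ffun 'I_n -> 'I_n}) : order_reversing f -> order_preserving (rv f).
Proof.
move=> /forallP C; apply/forallP => x; apply/forallP => y; rewrite !ffunE.
apply/implyP => xy.
move: (C (rev_ord y)) => /forallP /(_ (rev_ord x)) /implyP; apply.
rewrite /=; have := ltn_ord x; have := ltn_ord y; lia.
Qed.

Lemma rv_waist n (f : {ffun 'I_n -> 'I_n}) : right_waist (rv f) = right_waist f.
Proof.
rewrite /right_waist [RHS](reindex_inj rev_ord_inj).
by apply: eq_bigr => x _; rewrite ffunE.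
Qed.

Theorem corollary3p5 (n k : nat) (hn : 1 <= n) (hk1 : 1 <= k) (hkn : k <= n) :
  #|[set f : {ffun 'I_n -> 'I_n} | in_ORCT f && (right_waist f == k)]|
  = 2 * (\sum_(1 <= p < k.+1) 'C(n - 1, p - 1)) - 1.
Proof.
case: n hn hkn => // n' _ hkn.
pose B := [set f : {ffun 'I_n'.+1 -> 'I_n'.+1} |
  [&& contraction f, order_reversing f & right_waist f == k]].
have -> : [set f : {ffun 'I_n'.+1 -> 'I_n'.+1} | in_ORCT f && (right_waist f == k)]
   = Aset n' k :|: B.
  apply/setP => f; rewrite /B !inE /in_ORCT.
  by case: (contraction f); case: (order_preserving f); case: (order_reversing f);
    case: (right_waist f == k).
have -> : B = (@rv n'.+1) @: Aset n' k.
  apply/setP => f; apply/idP/imsetP.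
  - rewrite /B inE => /and3P [C R W]; exists (rv f); last by rewrite rvK.
    by rewrite inE rv_contr // rv_or // rv_waist W.
  - case=> h; rewrite inE => /and3P [C P W] ->.
    by rewrite inE rv_contr // rv_op // rv_waist W.
have Hint : #|Aset n' k :&: (@rv n'.+1) @: Aset n' k| = 1.
  pose cst : {ffun 'I_n'.+1 -> 'I_n'.+1} := [ffun _ => inord k.-1].
  have ek : (inord k.-1 : 'I_n'.+1) = k.-1 :> nat by rewrite inordK //; lia.
  have -> : Aset n' k :&: (@rv n'.+1) @: Aset n' k = [set cst]; last exact: cards1.
  apply/setP => f; rewrite !inE; apply/idP/idP.
  - case/andP => /and3P [C P W] /imsetP [h]; rewrite inE => /and3P [C' P' W'] ef.
    have R : order_reversing f by rewrite ef; exact: rv_op.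
    rewrite waist_op // in W.
    apply/eqP/ffunP => x; apply: val_inj; rewrite ffunE /= ek.
    move: P R => /forallP /(_ x) /forallP /(_ ord_max) /implyP P.
    move=> /forallP /(_ x) /forallP /(_ ord_max) /implyP R.
    have := P (leq_ord x); have := R (leq_ord x); move: W => /eqP; lia.
  - move=> /eqP ->.
    have Cc : contraction cst.
      by apply/forallP => x; apply/forallP => y; rewrite !ffunE /natdist subnn.
    have Pc : order_preserving cst.
      by apply/forallP => x; apply/forallP => y; rewrite !ffunE leqnn implybT.
    have Rc : order_reversing cst.
      by apply/forallP => x; apply/forallP => y; rewrite !ffunE leqnn implybT.
    have Wc : right_waist cst == k by rewrite waist_op // ffunE ek; apply/eqP; lia.
    rewrite ?inE Cc Pc Wc /=; apply/imsetP; exists cst.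
      by rewrite inE Cc Pc Wc.
    by apply/ffunP => x; rewrite !ffunE.
rewrite cardsU Hint card_imset; last exact: (can_inj (@rvK _)).
rewrite card_A // big_add1 /= big_mkord.
have -> : \sum_(i < k) 'C(n'.+1 - 1, i.+1 - 1) = \sum_(i < k) 'C(n', i).
  by apply: eq_bigr => i _; rewrite !subn1.
by rewrite mul2n addnn.
Qed.
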